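(* Let $\alpha$ be a set and $\odot:\alpha\times\alpha\to\alpha$. Calls $\mathrm{reduce}(\odot,\mathit{rdd})$ have deterministic outcomes if and only if $(\alpha,\odot)$ is a commutative semigroup, i.e. $\odot$ is associative and commutative.
   Context: Lists are finite; $\mathbin{+\!\!+}$ is concatenation. $\mathrm{foldl}(f,b,[\,])=b$, $\mathrm{foldl}(f,b,[x_1,\dots,x_n])=f(\cdots f(f(b,x_1),x_2)\cdots,x_n)$; for a nonempty list, $\mathrm{reducel}(f,[x_1,\dots,x_n])=\mathrm{foldl}(f,x_1,[x_2,\dots,x_n])$. An RDD is a list of lists. A partitioning (for reduce) is a function $P$ sending each nonempty list $L$ to an RDD obtained by splitting $L$ into consecutive nonempty pieces $p_1,\dots,p_n$ with $p_1\mathbin{+\!\!+}\cdots\mathbin{+\!\!+}p_n=L$ and then arbitrarily permuting $[p_1,\dots,p_n]$. $\mathrm{reduce}_{\mathrm{det}}(\odot,[q_1,\dots,q_m])=\mathrm{reducel}(\odot,[\mathrm{reducel}(\odot,q_1),\dots,\mathrm{reducel}(\odot,q_m)])$. Calls $\mathrm{reduce}(\odot,\mathit{rdd})$ have deterministic outcomes if $\mathrm{reduce}_{\mathrm{det}}(\odot,P(L))=\mathrm{reducel}(\odot,L)$ for all nonempty lists $L$ over $\alpha$ and all such partitionings $P$. *)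

(* Defs.v *)
From Stdlib Require Import List Permutation.
Import ListNotations.

Definition reducel {A : Type} (f : A -> A -> A) (l : list A) : option A :=
  match l with
  | [] => None
  | x :: xs => Some (fold_left f xs x)
  end.

Fixpoint all_some {A : Type} (l : list (option A)) : option (list A) :=
  match l with
  | [] => Some []
  | None :: _ => None
  | Some x :: r => match all_some r with Some r' => Some (x :: r') | None => None end
  end.

Definition reduce_det {A : Type} (f : A -> A -> A) (rdd : list (list A)) : option A :=
  match all_some (map (reducel f) rdd) with
  | Some vs => reducel f vs
  | None => None
  end.

Definition is_partition_of {A : Type} (L : list A) (rdd : list (list A)) : Prop :=
  exists ps : list (list A),
    Forall (fun p => p <> []) ps /\ concat ps = L /\ Permutation ps rdd.

Definition partitioning {A : Type} (P : list A -> list (list A)) : Prop :=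
  forall L : list A, L <> [] -> is_partition_of L (P L).

Definition deterministic_reduce {A : Type} (f : A -> A -> A) : Prop :=
  forall P : list A -> list (list A), partitioning P ->
  forall L : list A, L <> [] -> reduce_det f (P L) = reducel f L.

Definition associative {A : Type} (f : A -> A -> A) : Prop :=
  forall x y z, f (f x y) z = f x (f y z).
Definition commutative {A : Type} (f : A -> A -> A) : Prop :=
  forall x y, f x y = f y x.

(* Main.v *)
Require Import Defs.
From Stdlib Require Import List Permutation.
Import ListNotations.

Section S.
Variable (A : Type) (f : A -> A -> A).
Hypothesis Hassoc : associative f.

Lemma fold_assoc : forall xs a b, fold_left f xs (f a b) = f a (fold_left f xs b).
Proof.
  induction xs as [|y xs IH]; intros a b; simpl; auto.
  rewrite Hassoc. apply IH.
Qed.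

Lemma H_all : forall rdd, Forall (fun p => p <> []) rdd ->
  exists vs, all_some (map (reducel f) rdd) = Some vs /\
    forall v, fold_left f vs v = fold_left f (concat rdd) v.
Proof.
  induction rdd as [|q rest IH]; intros HF.
  - exists []. simpl. auto.
  - inversion HF as [|? ? Hq Hr]; subst.
    destruct (IH Hr) as [vs [E1 E2]].
    destruct q as [|y ys]; [congruence|].
    exists (fold_left f ys y :: vs). simpl. rewrite E1. split; auto.
    intro v. rewrite E2, fold_left_app. simpl. rewrite (fold_assoc ys). reflexivity.
Qed.

Lemma RD : forall rdd, Forall (fun p => p <> []) rdd -> rdd <> [] ->
  reduce_det f rdd = reducel f (concat rdd).
Proof.
  intros rdd HF Hn. destruct rdd as [|q rest]; [congruence|].
  inversion HF as [|? ? Hq Hr]; subst.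
  destruct (H_all rest Hr) as [vs [E1 E2]].
  destruct q as [|y ys]; [congruence|].
  unfold reduce_det. simpl. rewrite E1. simpl.
  rewrite E2, fold_left_app. reflexivity.
Qed.

Hypothesis Hcomm : commutative f.

Lemma fold_perm : forall l l', Permutation l l' -> forall v,
  fold_left f l v = fold_left f l' v.
Proof.
  intros l l' HP. induction HP; intros v; simpl; auto.
  - rewrite !Hassoc, (Hcomm y x). reflexivity.
  - rewrite IHHP1. auto.
Qed.

Lemma reducel_perm : forall l l', Permutation l l' -> reducel f l = reducel f l'.
Proof.
  intros [|x xs] [|y ys] HP; simpl; auto.
  - apply Permutation_nil_cons in HP. contradiction.
  - apply Permutation_sym, Permutation_nil_cons in HP. contradiction.
  - f_equal.
    assert (Hin : In y (x :: xs)).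
    { apply Permutation_in with (l := y :: ys). apply Permutation_sym; auto. left; auto. }
    destruct Hin as [<-|Hin].
    + apply fold_perm. eapply Permutation_cons_inv; eauto.
    + destruct (in_split _ _ Hin) as [a [b ->]].
      assert (HP2 : Permutation (x :: a ++ b) ys).
      { apply Permutation_sym. apply (@Permutation_cons_app_inv A ys (x :: a) b y).
        apply Permutation_sym. simpl. exact HP. }
      rewrite <- (fold_perm _ _ HP2). simpl.
      rewrite (fold_perm (a ++ y :: b) (y :: a ++ b)) by (apply Permutation_sym, Permutation_middle).
      simpl. rewrite Hcomm. reflexivity.
Qed.

End S.

Lemma perm_concat {A} : forall (ps rdd : list (list A)), Permutation ps rdd ->
  Permutation (concat ps) (concat rdd).
Proof.
  intros ps rdd HP. induction HP; simpl; auto.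
  - apply Permutation_app_head; auto.
  - rewrite !app_assoc. apply Permutation_app_tail. apply Permutation_app_comm.
  - eapply Permutation_trans; eauto.
Qed.

Theorem corollary2 (A : Type) (f : A -> A -> A) :
  deterministic_reduce f <-> (associative f /\ commutative f).
Proof.
  split.
  - intros D. split.
    + intros x y z.
      set (P := fun L : list A => match L with [a;b;c] => [[a];[b;c]] | _ => [L] end).
      assert (HP : partitioning P).
      { intros L HL. unfold P.
        destruct L as [|a [|b [|c [|d l]]]]; try congruence.
        - exists [[a]]. split; [constructor; [congruence|constructor]|split; [reflexivity|apply Permutation_refl]].
        - exists [[a;b]]. split; [constructor; [congruence|constructor]|split; [reflexivity|apply Permutation_refl]].
        - exists [[a];[b;c]]. split; [constructor; [congruence|constructor; [congruence|constructor]]|split; [reflexivity|apply Permutation_refl]].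
        - exists [a::b::c::d::l]. split; [constructor; [congruence|constructor]|split; [simpl; rewrite app_nil_r; reflexivity|apply Permutation_refl]]. }
      specialize (D P HP [x;y;z] ltac:(congruence)).
      simpl in D. injection D. auto.
    + intros x y.
      set (P := fun L : list A => match L with [a;b] => [[b];[a]] | _ => [L] end).
      assert (HP : partitioning P).
      { intros L HL. unfold P.
        destruct L as [|a [|b [|c l]]]; try congruence.
        - exists [[a]]. split; [constructor; [congruence|constructor]|split; [reflexivity|apply Permutation_refl]].
        - exists [[a];[b]]. split; [constructor; [congruence|constructor; [congruence|constructor]]|split; [reflexivity|apply perm_swap]].
        - exists [a::b::c::l]. split; [constructor; [congruence|constructor]|split; [simpl; rewrite app_nil_r; reflexivity|apply Permutation_refl]]. }
      specialize (D P HP [x;y] ltac:(congruence)).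
      simpl in D. injection D. auto.
  - intros [Ha Hc] P HP L HL.
    destruct (HP L HL) as [ps [HF [Hc' Hperm]]].
    assert (HF' : Forall (fun p => p <> []) (P L)) by (eapply Permutation_Forall; eauto).
    assert (Hn : P L <> []).
    { intro E. rewrite E in Hperm. apply Permutation_sym, Permutation_nil in Hperm.
      subst. simpl in HL. congruence. }
    rewrite (RD A f Ha _ HF' Hn).
    apply (reducel_perm A f Ha Hc).
    assert (Hpc := perm_concat _ _ Hperm). rewrite Hc' in Hpc. apply Permutation_sym; exact Hpc.
Qed.
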